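(* Let $(G,\phi,(g_1,\dots,g_n))$ be an $n$-expansion group. Then $\#G = \#L_\bullet(G) \leq 2^{n2^{n-1}-2^n+n+1}$. In particular, $\{g_1,\dots,g_n\}$ is a generating set for $G$.
   Context: $V_{[n]}=\mathbb{F}_2^n$ with basis $e_1,\dots,e_n$. An $n$-expansion group is a triple $(G,\phi,(g_1,\dots,g_n))$: $G$ a group, $\phi:G\to V_{[n]}$ a homomorphism with $\phi(g_i)=e_i$, $g_i^2=1$ for all $i$, $\ker\phi$ an elementary abelian $2$-group, and $[G,G]=\ker\phi$. With $G^{(1)}=G$, $G^{(i+1)}=[G,G^{(i)}]$, set $L_\bullet(G)=\bigoplus_{m\geq1}G^{(m)}/G^{(m+1)}$ (a set whose cardinality is $\#L_\bullet(G)$). *)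

(* Defs.v *)
(* abstract, possibly infinite groups are given
   explicitly by a record of operations and axioms. *)
From mathcomp Require Import all_boot all_algebra.
Set Implicit Arguments. Unset Strict Implicit. Unset Printing Implicit Defensive.
Import GRing.Theory.
From Stdlib Require List.

Record group_law (T : Type) := GroupLaw {
  gmul : T -> T -> T;
  ginv : T -> T;
  gone : T;
  gmulA : forall x y z, gmul x (gmul y z) = gmul (gmul x y) z;
  gmul1 : forall x, gmul gone x = x;
  gmulV : forall x, gmul (ginv x) x = gone
}.

Section GroupDefs.
Variables (T : Type) (L : group_law T).
Local Notation "x * y" := (gmul L x y).
Local Notation "x ^-1" := (ginv L x).
Local Notation "1" := (gone L).

Inductive generated (S : T -> Prop) : T -> Prop :=
| gen_in x : S x -> generated S x
| gen_one : generated S 1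
| gen_mul x y : generated S x -> generated S y -> generated S (x * y)
| gen_inv x : generated S x -> generated S (x^-1).

Definition gcomm (x y : T) : T := x^-1 * (y^-1 * (x * y)).

Definition comm_subgroup (A B : T -> Prop) : T -> Prop :=
  generated (fun z => exists x y, A x /\ B y /\ z = gcomm x y).

Fixpoint lcs (m : nat) : T -> Prop :=
  match m with
  | 0 => fun _ => True
  | 1 => fun _ => True
  | m'.+1 => comm_subgroup (fun _ => True) (lcs m')
  end.

Definition card_mod (X : Type) (A : X -> Prop) (R : X -> X -> Prop) (N : nat) :=
  exists s : seq X,
    size s = N /\ (forall x, List.In x s -> A x) /\
    (forall x, A x -> exists2 y, List.In y s & R x y) /\
    List.ForallOrdPairs (fun a b => ~ R a b) s.

(* Elements of L_bullet(G) = (+)_{m>=1} G^(m)/G^(m+1): finitely supported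
   families f with f m in G^(m+1) representing a class of
   G^(m+1)/G^(m+2) (shifted index m |-> m+1). *)
Definition Lbullet_elem (f : nat -> T) : Prop :=
  (forall m, lcs m.+1 (f m)) /\ exists M, forall m, M <= m -> lcs m.+2 (f m).

Definition Lbullet_eq (f f' : nat -> T) : Prop :=
  forall m, lcs m.+2 ((f m)^-1 * f' m).

Definition card_Lbullet (N : nat) := card_mod Lbullet_elem Lbullet_eq N.

Definition card_group (N : nat) := card_mod (fun _ : T => True) (@eq T) N.

End GroupDefs.

Definition Vn (n : nat) := 'rV['F_2]_n.
Definition basis_e (n : nat) (i : 'I_n) : Vn n := delta_mx ord0 i.

Definition expansion_group (n : nat) (T : Type) (L : group_law T)
    (phi : T -> Vn n) (g : 'I_n -> T) : Prop :=
  [/\ (forall x y, phi (gmul L x y) = (phi x + phi y)%R),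
      (forall i, phi (g i) = basis_e i),
      (forall i, gmul L (g i) (g i) = gone L),
      (forall x y, phi x = 0%R -> phi y = 0%R ->
         gmul L x x = gone L /\ gmul L x y = gmul L y x) &
      (forall x, comm_subgroup L (fun _ => True) (fun _ => True) x <-> phi x = 0%R)].

(* Main.v *)
Require Import Defs.
From mathcomp Require Import all_boot all_algebra.
From HB Require Import structures.
From Stdlib Require Import ClassicalEpsilon Classical.
Set Implicit Arguments. Unset Strict Implicit. Unset Printing Implicit Defensive.
Import GRing.Theory.


Lemma card_sets n : #|{set 'I_n}| = 2 ^ n.
Proof. by rewrite -cardsT -powersetT card_powerset cardsT card_ord. Qed.

Lemma sum_card2 n : (\sum_(A : {set 'I_n}) #|A|) * 2 = n * 2 ^ n.
Proof.
have e : \sum_(A : {set 'I_n}) #|A| = \sum_(A : {set 'I_n}) #|~: A|.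
  by rewrite [LHS](reindex_inj (@setC_inj _)).
rewrite muln2 -addnn {2}e -big_split /=.
rewrite (eq_bigr (fun _ => n)); last by move=> A _; rewrite cardsC card_ord.
by rewrite sum_nat_const card_sets mulnC.
Qed.

Lemma sum_card n : \sum_(A : {set 'I_n}) #|A| = n * 2 ^ n.-1.
Proof.
have := sum_card2 n; case: n => [|k] /=.
  by rewrite !mul0n => /eqP; rewrite muln_eq0 orbF => /eqP ->.
by rewrite expnS (mulnC 2) mulnA => /eqP; rewrite eqn_pmul2r // => /eqP ->.
Qed.

Lemma comb n : (\sum_(A : {set 'I_n}) (#|A|).-1) + 2 ^ n = n * 2 ^ n.-1 + 1.
Proof.
rewrite -card_sets -sum1_card -big_split /= -sum_card.
rewrite (bigD1 set0) //= (bigD1 set0 (P := xpredT)) //= cards0 add0n.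
rewrite addnC; congr (_ + _); apply: eq_bigr => A A0.
rewrite addn1 prednK // card_gt0 //.
Qed.


Definition Teq (T : Type) := T.
Definition ceqb (T : Type) (x y : T) : bool :=
  if excluded_middle_informative (x = y) then true else false.
Lemma ceqP (T : Type) : Equality.axiom (@ceqb T).
Proof. move=> x y; rewrite /ceqb; case: excluded_middle_informative => h; constructor => //. Qed.
HB.instance Definition _ (T : Type) := hasDecEq.Build (Teq T) (@ceqP T).

Lemma inP_In (X : eqType) (x : X) (s : seq X) : x \in s -> List.In x s.
Proof. elim: s => //= a s IH; rewrite in_cons => /orP[/eqP->|/IH]; by [left|right]. Qed.
Lemma In_inP (X : eqType) (x : X) (s : seq X) : List.In x s -> x \in s.
Proof. elim: s => //= a s IH [->|/IH]; rewrite in_cons ?eqxx // => ->; by rewrite orbT. Qed.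

Lemma FOP_map (X : eqType) (Y : Type) (f : X -> Y) (R : Y -> Y -> Prop) (s : seq X) :
  uniq s -> (forall x y, x \in s -> y \in s -> R (f x) (f y) -> x = y) ->
  List.ForallOrdPairs (fun a b => ~ R a b) (map f s).
Proof.
elim: s => [|a s IH] /=; first by constructor.
move=> /andP[as_ us] H; constructor.
  apply/List.Forall_forall => y /List.in_map_iff [x [<- xs]] Hr.
  have xs' := In_inP xs.
  have := H a x; rewrite !in_cons eqxx xs' orbT => /(_ isT isT Hr) ax.
  by rewrite ax xs' in as_.
apply: IH => // x y xs ys; apply: H; by rewrite in_cons ?xs ?ys orbT.
Qed.

Section Grp.
Variables (T : Type) (L : group_law T).
Declare Scope grp_scope.
Local Notation "x * y" := (gmul L x y) : grp_scope.
Local Notation "x ^-1" := (ginv L x) : grp_scope.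
Local Notation o := (gone L).
Local Open Scope grp_scope.

Lemma mul1g x : o * x = x. Proof. exact: gmul1. Qed.
Lemma mulVg x : x^-1 * x = o. Proof. exact: gmulV. Qed.
Lemma mulgA x y z : x * (y * z) = x * y * z. Proof. exact: gmulA. Qed.
Lemma mulKg x y : x^-1 * (x * y) = y. Proof. by rewrite mulgA mulVg mul1g. Qed.
Lemma mulgV x : x * x^-1 = o.
Proof. by rewrite -{1}(mulKg (x^-1) x) mulVg -mulgA mul1g mulVg. Qed.
Lemma mulg1 x : x * o = x. Proof. by rewrite -(mulVg x) mulgA mulgV mul1g. Qed.
Lemma mulKVg x y : x * (x^-1 * y) = y. Proof. by rewrite mulgA mulgV mul1g. Qed.
Lemma mulgK x y : x * y * y^-1 = x. Proof. by rewrite -mulgA mulgV mulg1. Qed.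
Lemma mulgKV x y : x * y^-1 * y = x. Proof. by rewrite -mulgA mulVg mulg1. Qed.
Lemma mulgI x y z : x * y = x * z -> y = z.
Proof. by move=> h; rewrite -(mulKg x y) h mulKg. Qed.
Lemma mulIg x y z : y * x = z * x -> y = z.
Proof. by move=> h; rewrite -(mulgK y x) h mulgK. Qed.
Lemma invgK x : (x^-1)^-1 = x.
Proof. by apply: (@mulgI (x^-1)); rewrite mulgV mulVg. Qed.
Lemma invMg x y : (x * y)^-1 = y^-1 * x^-1.
Proof. by apply: (@mulgI (x * y)); rewrite mulgV -mulgA mulKVg mulgV. Qed.
Lemma invg1 : o^-1 = o. Proof. by rewrite -{2}(mulVg o) mulg1. Qed.
Lemma inv_eq x y : x * y = o -> x^-1 = y.
Proof. by move=> h; rewrite -(mulKg x y) h mulg1. Qed.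

Definition subgrp (P : T -> Prop) :=
  [/\ P o, forall x y, P x -> P y -> P (x * y) & forall x, P x -> P (x^-1)].

Lemma gen_sub (S P : T -> Prop) : subgrp P -> (forall x, S x -> P x) ->
  forall x, generated L S x -> P x.
Proof. by case=> h1 hM hV hS x; elim=> //; auto. Qed.

Lemma gen_subgrp S : subgrp (generated L S).
Proof. split; [exact: gen_one | exact: gen_mul | exact: gen_inv]. Qed.

Lemma gen_mono (S S' : T -> Prop) : (forall x, S x -> S' x) ->
  forall x, generated L S x -> generated L S' x.
Proof. move=> h; apply: gen_sub; first exact: gen_subgrp. by move=> x /h; apply: gen_in. Qed.

Definition gconj (z h : T) := h^-1 * (z * h).
Local Notation conj := gconj.
Local Notation cm := (gcomm L).

Lemma cmE x y : cm x y = x^-1 * conj x y. Proof. by []. Qed.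
Lemma conjM z w h : conj (z * w) h = conj z h * conj w h.
Proof. by rewrite /conj !mulgA mulgK -!mulgA. Qed.
Lemma conjMh z h k : conj z (h * k) = conj (conj z h) k.
Proof. by rewrite /conj invMg !mulgA. Qed.
Lemma conj1 z : conj z o = z. Proof. by rewrite /conj invg1 mulg1 mul1g. Qed.
Lemma conjo h : conj o h = o. Proof. by rewrite /conj mul1g mulVg. Qed.
Lemma conjV z h : conj (z^-1) h = (conj z h)^-1.
Proof. by apply: esym; apply: inv_eq; rewrite -conjM mulgV conjo. Qed.
Lemma cm_inv x y : (cm x y)^-1 = cm y x.
Proof. by rewrite /gcomm !invMg !invgK !mulgA. Qed.
Lemma cmM1 x y z : cm (x * y) z = conj (cm x z) y * cm y z.
Proof. by rewrite /gcomm /conj !invMg ?invgK !mulgA !mulgK. Qed.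
Lemma cmM2 x y z : cm x (y * z) = cm x z * conj (cm x y) z.
Proof. by rewrite /gcomm /conj !invMg ?invgK !mulgA !mulgK. Qed.
Lemma cm1g y : cm o y = o. Proof. by rewrite /gcomm invg1 mul1g mul1g mulVg. Qed.
Lemma cmg1 y : cm y o = o. Proof. by rewrite /gcomm invg1 mul1g mulg1 mulVg. Qed.

Lemma extract_reps (B C : T -> Prop) (s : seq (Teq T)) : subgrp C ->
  exists R : seq (Teq T), [/\ uniq R, (forall r, r \in R -> B r),
    (forall x, x \in s -> B x -> exists2 r, r \in R & C (x^-1 * r)) &
    (forall r r', r \in R -> r' \in R -> C (r^-1 * r') -> r = r')].
Proof.
move=> [C1 CM CV]; elim: s => [|a s [R [uR RB Rcov Runi]]].
  by exists [::]; split.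
case: (classic (B a /\ ~ exists2 r, r \in R & C (a^-1 * r))) => [[Ba nex]|H].
  exists (a :: R); split.
  - rewrite /= uR andbT; apply/negP => aR; apply: nex; exists a => //.
    by rewrite mulVg.
  - by move=> r; rewrite in_cons => /orP[/eqP->|/RB].
  - move=> x; rewrite in_cons => /orP[/eqP->|xs] Bx.
      by exists a; rewrite ?mem_head // mulVg.
    by have [r rR hr] := Rcov x xs Bx; exists r; rewrite // in_cons rR orbT.
  - move=> r r'; rewrite !in_cons => /orP[/eqP->|rR] /orP[/eqP->|r'R] //.
    + by move=> h; case: nex; exists r'.
    + move=> h; case: nex; exists r => //.
      by have := CV _ h; rewrite invMg invgK.
    + exact: Runi.
exists R; split => // x; rewrite in_cons => /orP[/eqP->|xs] Bx; last exact: Rcov.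
apply: NNPP => nex; apply: H; split => // ex; apply: nex; exact: ex.
Qed.

Definition prodt (t : seq T) := foldr (gmul L) o t.
Definition famt (t : seq T) := fun m => nth o t m.

Variable (A : nat -> T -> Prop).
Hypothesis A_sub : forall m, subgrp (A m).
Hypothesis A_dec : forall m x, A m.+1 x -> A m x.

Lemma A_decn k m x : A (m + k) x -> A m x.
Proof. by elim: k => [|k IH]; rewrite ?addn0 // addnS => /A_dec /IH. Qed.

Lemma chain_ind (s : seq (Teq T)) (hs : forall x, x \in s) j : forall m,
  exists U : seq (seq (Teq T)), 
   uniq U /\
   (forall t, t \in U -> size t = j /\ (forall p, p < j -> A (m + p) (nth o t p))) /\
   (forall t, t \in U -> A m (prodt t)) /\
   (forall x, A m x -> exists2 t, t \in U & exists w, A (m + j) w /\ x = prodt t * w) /\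
   (forall f, (forall p, A p (f p)) -> exists2 t, t \in U &
      forall p, p < j -> A (m + p).+1 ((f (m + p))^-1 * nth o t p)) /\
   (forall t t' w w', t \in U -> t' \in U -> A (m + j) w -> A (m + j) w' ->
      prodt t * w = prodt t' * w' -> t = t') /\
   (forall t t', t \in U -> t' \in U ->
      (forall p, p < j -> A (m + p).+1 ((nth o t p)^-1 * nth o t' p)) -> t = t').
Proof.
elim: j => [|j IH] m.
  exists [:: [::]]; refine (Logic.conj _ (Logic.conj _ (Logic.conj _ (Logic.conj _ (Logic.conj _ (Logic.conj _ _)))))) => //.
  - by move=> t; rewrite mem_seq1 => /eqP->; split.
  - by move=> t; rewrite mem_seq1 => /eqP->; case: (A_sub m).
  - by move=> x Ax; exists [::]; rewrite ?mem_seq1 //; exists x; rewrite addn0 /= mul1g.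
  - by move=> f _; exists [::]; rewrite ?mem_seq1.
  - by move=> t t' w w'; rewrite !mem_seq1 => /eqP-> /eqP->.
  - by move=> t t'; rewrite !mem_seq1 => /eqP-> /eqP->.
have [R [uR RB Rcov Runi]] := extract_reps (A m) s (A_sub m.+1).
have [U [uU [Usz [UA [Ucov [Ufcov [Uinj Ufinj]]]]]]] := IH m.+1.
have [A1 AM AV] := A_sub m; have [B1 BM BV] := A_sub m.+1.
exists [seq (r :: t : seq (Teq T)) | r : Teq T <- R, t : seq (Teq T) <- U].
refine (Logic.conj _ (Logic.conj _ (Logic.conj _ (Logic.conj _ (Logic.conj _ (Logic.conj _ _)))))).
- apply: allpairs_uniq => // [[r t]] [r' t'] _ _ /= [-> ->] //.
- move=> t /allpairsP [[r t'] [/= rR t'U ->]]; split; first by rewrite /= (Usz _ t'U).1.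
  case=> [|p] /=; first by rewrite addn0 => _; apply: RB.
  by rewrite ltnS addnS -addSn => hp; apply: (Usz _ t'U).2.
- move=> t /allpairsP [[r t'] [/= rR t'U ->]] /=.
  by apply: AM; [exact: RB|apply: A_dec; exact: UA].
- move=> x Ax; have [r rR hr] := Rcov x (hs x) Ax.
  have hr' : A m.+1 (r^-1 * x) by have := BV _ hr; rewrite invMg invgK.
  have [t' t'U [w [hw e]]] := Ucov _ hr'.
  exists (r :: t'); first by apply: allpairs_f.
  exists w; split; first by rewrite addnS -addSn.
  by rewrite /= -mulgA -e mulKVg.
- move=> f hf; have [r rR hr] := Rcov (f m) (hs _) (hf m).
  have [t' t'U ht'] := Ufcov f hf.
  exists (r :: t'); first by apply: allpairs_f.
  case=> [|p] /=; first by rewrite addn0.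
  by rewrite ltnS addnS -addSn => hp; apply: ht'.
- move=> t t' w w' /allpairsP [[r1 t1] [/= r1R t1U ->]] /allpairsP [[r2 t2] [/= r2R t2U ->]].
  rewrite addnS -addSn => hw hw' /= e.
  rewrite -!mulgA in e.
  have e1 : r1^-1 * r2 = (prodt t1 * w) * (prodt t2 * w')^-1.
    by apply: (@mulgI r1); rewrite mulKVg mulgA e mulgK.
  have r12 : r1 = r2.
    apply: Runi => //; rewrite e1; apply BM; [apply BM|apply BV; apply BM].
    + exact: UA.
    + exact: A_decn hw.
    + exact: UA.
    + exact: A_decn hw'.
  rewrite r12 in e *; have e' := mulgI e.
  by rewrite (Uinj _ _ _ _ t1U t2U hw hw' e').
- move=> t t' /allpairsP [[r1 t1] [/= r1R t1U ->]] /allpairsP [[r2 t2] [/= r2R t2U ->]] h.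
  have r12 : r1 = r2 by apply: Runi => //; have := h 0 isT; rewrite addn0.
  rewrite r12 (Ufinj t1 t2) // => p hp.
  by have := h p.+1 hp; rewrite addnS -addSn.
Qed.

Lemma chain_count (s : seq (Teq T)) (hs : forall x, x \in s) K
  (hA0 : forall x, A 0 x) (hK : forall x, A K x -> x = o) :
  exists N, [/\ card_mod (fun _ : T => True) (@eq T) N,
   card_mod (fun f : nat -> T => (forall m, A m (f m)) /\ exists M, forall m, M <= m -> A m.+1 (f m))
            (fun f f' => forall m, A m.+1 ((f m)^-1 * f' m)) N &
   N <= size s].
Proof.
have [U [uU [Usz [UA [Ucov [Ufcov [Uinj Ufinj]]]]]]] := chain_ind hs K 0.
have AK1 : A K o by case: (A_sub K).
have pinj : {in U &, injective prodt}.
  move=> t t' tU t'U e; apply: (Uinj t t' o o) => //; by rewrite !mulg1.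
exists (size U); split.
- exists (map prodt U); split; first by rewrite size_map.
  split; first by [].
  split.
    move=> x _; have [t tU [w [hw e]]] := Ucov x (hA0 x).
    rewrite add0n in hw; exists (prodt t); last by rewrite e (hK _ hw) mulg1.
    by apply/List.in_map_iff; exists t; split => //; exact: (inP_In tU).
  by apply: (@FOP_map (seq (Teq T) : eqType) T prodt (@eq T) U) => // t t' tU t'U; apply: pinj.
- exists (map famt U); split; first by rewrite size_map.
  split.
    move=> f /List.in_map_iff [t [<- tU']].
    have tU : t \in U := @In_inP (seq (Teq T) : eqType) t U tU'.
    have [szt At] := Usz t tU.
    split.
      move=> m; rewrite /famt; case: (ltnP m K) => hm; first by have := At m hm; rewrite add0n.
      by rewrite nth_default ?szt //; case: (A_sub m).
    exists K => m hm; rewrite /famt nth_default ?szt //; by case: (A_sub m.+1).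
  split.
    move=> f [hf _]; have [t tU ht] := Ufcov f hf.
    exists (famt t); first by apply/List.in_map_iff; exists t; split => //; exact: (inP_In tU).
    move=> m; case: (ltnP m K) => hm; first by have := ht m hm; rewrite add0n.
    have [szt _] := Usz t tU.
    have fm : f m = o by apply: hK; apply: (@A_decn (m - K)); rewrite subnKC.
    rewrite /famt nth_default ?szt // fm invg1 mul1g; by case: (A_sub m.+1).
  apply: (@FOP_map (seq (Teq T) : eqType) _ famt _ U) => // t t' tU t'U h; apply: Ufinj => // p _; rewrite add0n; exact: h.
- rewrite -(size_map prodt); apply: uniq_leq_size => //.
  by rewrite (@map_inj_in_uniq (seq (Teq T) : eqType) (Teq T) prodt U).
Qed.

End Grp.


Section Exp.
Variables (n : nat) (T : Type) (L : group_law T) (phi : T -> Vn n) (g : 'I_n -> T).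
Declare Scope grp_scope.
Local Notation "x * y" := (gmul L x y) : grp_scope.
Local Notation "x ^-1" := (ginv L x) : grp_scope.
Local Notation o := (gone L).
Local Notation cm := (gcomm L).
Local Notation conj := (gconj L).
Local Open Scope grp_scope.

Hypothesis Hphi : forall x y, phi (x * y) = (phi x + phi y)%R.
Hypothesis Hg : forall i, phi (g i) = basis_e i.
Hypothesis Hgg : forall i, g i * g i = o.
Hypothesis HM : forall x y, phi x = 0%R -> phi y = 0%R -> x * x = o /\ x * y = y * x.
Hypothesis Hc : forall x, comm_subgroup L (fun _ => True) (fun _ => True) x <-> phi x = 0%R.

Definition inM x := phi x = 0%R.

Lemma phi1 : phi o = 0%R.
Proof. have h := Hphi o o; rewrite mul1g in h. by apply: (@addrI _ (phi o)); rewrite -h addr0. Qed.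
Lemma phiV x : phi (x^-1) = (- phi x)%R.
Proof. have h := Hphi x (x^-1); rewrite mulgV phi1 in h. by apply: (@addrI _ (phi x)); rewrite -h subrr. Qed.

Lemma M1 : inM o. Proof. exact: phi1. Qed.
Lemma MM x y : inM x -> inM y -> inM (x * y).
Proof. by rewrite /inM Hphi => -> ->; rewrite addr0. Qed.
Lemma MV x : inM x -> inM (x^-1).
Proof. by rewrite /inM phiV => ->; rewrite oppr0. Qed.
Lemma Mconj z h : inM z -> inM (conj z h).
Proof. by rewrite /inM /gconj !Hphi phiV => ->; rewrite add0r addNr. Qed.
Lemma Mcm x y : inM (cm x y).
Proof. by rewrite /inM /gcomm !Hphi !phiV (addrC (phi x) (phi y)) addKr addNr. Qed.
Lemma Msub : subgrp L inM.
Proof. split; [exact: M1|exact: MM|exact: MV]. Qed.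
Lemma MinvE z : inM z -> z^-1 = z.
Proof. by move=> h; apply: inv_eq; case: (HM h h). Qed.
Lemma Mcomm z w : inM z -> inM w -> z * w = w * z.
Proof. by move=> h1 h2; case: (HM h1 h2). Qed.
Lemma Msq z : inM z -> z * z = o.
Proof. by move=> h; case: (HM h h). Qed.
Lemma Mswap w x y : inM x -> inM y -> w * x * y = w * y * x.
Proof. by move=> hx hy; rewrite -!mulgA (Mcomm hx hy). Qed.
Lemma conj_triv z c : inM z -> inM c -> conj z c = z.
Proof. by move=> hz hc; rewrite /gconj (Mcomm hz hc) mulKg. Qed.
Lemma cm_triv z w : inM z -> inM w -> cm z w = o.
Proof. by move=> hz hw; rewrite cmE conj_triv // mulVg. Qed.
Lemma ginvE i : (g i)^-1 = g i.
Proof. by apply: inv_eq. Qed.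
Lemma cmE' z h : inM z -> cm z h = z * conj z h.
Proof. by move=> hz; rewrite cmE MinvE. Qed.
Lemma conjE' z h : inM z -> conj z h = z * cm z h.
Proof. by move=> hz; rewrite cmE' // mulgA Msq // mul1g. Qed.

Lemma cm_hom z w h : inM z -> inM w -> cm (z * w) h = cm z h * cm w h.
Proof. by move=> hz hw; rewrite cmM1 conj_triv //; apply: Mcm. Qed.

Lemma cm_swap z a b : inM z -> cm (cm z a) b = cm (cm z b) a.
Proof.
move=> hz.
have hza := Mconj a hz; have hzb := Mconj b hz.
rewrite (cmE' a hz) (cmE' b hz) (cm_hom _ hz hza) (cm_hom _ hz hzb).
rewrite (cmE' a hz) (cmE' b hz) (cmE' b hza) (cmE' a hzb) -!conjMh.
have -> : b * a = a * b * cm b a by rewrite /gcomm !mulgA mulgK mulgV mul1g.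
rewrite (conjMh L z (a*b) (cm b a)) (conj_triv (Mconj _ hz) (Mcm b a)).
move: hza hzb; set za := conj z a; set zb := conj z b; set zab := conj z (a*b) => hza hzb.
clearbody za zb zab. by rewrite !mulgA (Mswap _ hzb hza).
Qed.

Lemma cm_sq z a : inM z -> a * a = o -> cm (cm z a) a = o.
Proof.
move=> hz haa; have hza := Mconj a hz.
rewrite (cmE' a hz) (cm_hom _ hz hza) (cmE' a hz) (cmE' a hza) -conjMh haa conj1.
move: hza; set za := conj z a => hza; clearbody za.
by rewrite mulgA -(mulgA L z za za) Msq // mulg1 Msq.
Qed.

Lemma gK x i : x * g i * g i = x.
Proof. by rewrite -mulgA Hgg mulg1. Qed.

Lemma cmcm_l a b : cm (cm (g a) (g b)) (g a) = o.
Proof.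
rewrite (cmE' _ (Mcm _ _)).
have -> : conj (cm (g a) (g b)) (g a) = (cm (g a) (g b))^-1.
  rewrite /gconj /gcomm !invMg !ginvE !mulgA.
  by rewrite ?Hgg ?mul1g ?gK.
by rewrite mulgV.
Qed.

Lemma cmcm_r a b : cm (cm (g a) (g b)) (g b) = o.
Proof.
rewrite (cmE' _ (Mcm _ _)).
have -> : conj (cm (g a) (g b)) (g b) = (cm (g a) (g b))^-1.
  rewrite /gconj /gcomm !invMg !ginvE !mulgA.
  by rewrite ?Hgg ?mul1g ?gK.
by rewrite mulgV.
Qed.

Lemma cm_sym a b : cm (g a) (g b) = cm (g b) (g a).
Proof. by rewrite -cm_inv MinvE //; apply: Mcm. Qed.

Lemma cm_gg a : cm (g a) (g a) = o.
Proof. by rewrite /gcomm mulKg mulVg. Qed.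

Lemma reord6 x1 x2 x3 x4 x5 x6 : inM x1 -> inM x2 -> inM x3 -> inM x4 -> inM x5 -> inM x6 ->
  x1 * x2 * (x3 * x4) * (x5 * x6) = x1^-1 * x4 * x5^-1 * x2 * x3^-1 * x6.
Proof.
move=> h1 h2 h3 h4 h5 h6; rewrite !MinvE // !mulgA.
by rewrite (Mswap _ h3 h4) (Mswap _ h2 h4) (Mswap _ h3 h5) (Mswap _ h2 h5).
Qed.

Lemma jacobi a b c :
  cm (cm (g a) (g b)) (g c) * cm (cm (g b) (g c)) (g a) * cm (cm (g c) (g a)) (g b) = o.
Proof.
set u1 := cm (g a) (g b); set u2 := cm (g b) (g c); set u3 := cm (g c) (g a).
have h1 : inM u1 by apply: Mcm.
have h2 : inM u2 by apply: Mcm.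
have h3 : inM u3 by apply: Mcm.
have h1' := Mconj (g c) h1; have h2' := Mconj (g a) h2; have h3' := Mconj (g b) h3.
rewrite (cmE' _ h1) (cmE' _ h2) (cmE' _ h3) reord6 //.
rewrite /u1 /u2 /u3 /gconj /gcomm !invMg !ginvE !mulgA.
by rewrite !gK Hgg.
Qed.

Definition xact (l : seq 'I_n) (z : T) := foldr (fun i w => cm w (g i)) z l.

Lemma xact_cons i l z : xact (i :: l) z = cm (xact l z) (g i). Proof. by []. Qed.

Lemma xact_M l z : inM z -> inM (xact l z).
Proof. by case: l => //= i l _; apply: Mcm. Qed.

Lemma xact_hom l z w : inM z -> inM w -> xact l (z * w) = xact l z * xact l w.
Proof. by move=> hz hw; elim: l => //= i l ->; rewrite cm_hom //; apply: xact_M. Qed.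

Lemma xact_1 l : xact l o = o.
Proof. by elim: l => //= i l ->; rewrite cm1g. Qed.

Lemma xact_inner l i z : inM z -> xact l (cm z (g i)) = cm (xact l z) (g i).
Proof.
move=> hz; elim: l => //= j l ->; rewrite cm_swap //; exact: xact_M.
Qed.

Lemma xact_consE i l z : inM z -> xact (i :: l) z = xact l (cm z (g i)).
Proof. by move=> hz; rewrite xact_cons xact_inner. Qed.

Lemma xact_rem l i z : inM z -> i \in l -> xact l z = cm (xact (rem i l) z) (g i).
Proof.
move=> hz; elim: l => //= j l IH; rewrite in_cons; case: eqVneq => [-> _|ne /= il].
  by [].
rewrite IH // cm_swap //; exact: xact_M.
Qed.

Lemma xact_perm l l' z : inM z -> perm_eq l l' -> xact l z = xact l' z.
Proof.
move=> hz; elim: l l' => [|i l IH] l' pl.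
  by case: l' pl => // a l' /perm_size.
have il' : i \in l' by rewrite -(perm_mem pl) mem_head.
rewrite (xact_rem hz il') xact_cons (IH (rem i l')) //.
by rewrite -(perm_cons i) (perm_trans pl) // perm_to_rem.
Qed.

Lemma xact_dup i l z : inM z -> i \in l -> xact (i :: l) z = o.
Proof.
move=> hz il; by rewrite xact_cons (xact_rem hz il) (cm_sq (xact_M _ hz) (Hgg i)).
Qed.

Lemma xact_nuniq l z : inM z -> ~~ uniq l -> xact l z = o.
Proof.
move=> hz; elim: l => //= i l IH; rewrite negb_and negbK => /orP[il|/IH ->].
  exact: xact_dup.
by rewrite cm1g.
Qed.

Lemma xact_c_l a b l : a \in l -> xact l (cm (g a) (g b)) = o.
Proof.
move=> al; rewrite (xact_rem (Mcm _ _) al) -xact_inner; last exact: Mcm.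
by rewrite cmcm_l xact_1.
Qed.

Lemma xact_c_r a b l : b \in l -> xact l (cm (g a) (g b)) = o.
Proof.
move=> al; rewrite (xact_rem (Mcm _ _) al) -xact_inner; last exact: Mcm.
by rewrite cmcm_r xact_1.
Qed.

Lemma xact_size_M l z : inM (xact l z) \/ l = [::].
Proof. by case: l => [|i l]; [right|left; apply: Mcm]. Qed.

Definition hword (l : seq 'I_n) := foldr (fun i w => g i * w) o l.

Definition prodsub (l : seq (Teq T)) : seq (Teq T) :=
  foldr (fun b s => s ++ [seq (b * p : Teq T) | p : Teq T <- s]) [:: (o : Teq T)] l.

Lemma size_prodsub l : size (prodsub l) = 2 ^ size l.
Proof. by elim: l => //= b l IH; rewrite size_cat size_map IH expnS mul2n addnn. Qed.

Lemma mem_prodsub b l x : (x \in prodsub (b :: l)) =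
  (x \in prodsub l) || (x \in [seq (b * p : Teq T) | p : Teq T <- prodsub l]).
Proof. by rewrite /= mem_cat. Qed.

Lemma prodsub1 l : (o : Teq T) \in prodsub l.
Proof. by elim: l => [|b l IH]; rewrite ?mem_seq1 // mem_prodsub IH. Qed.

Definition allM (l : seq (Teq T)) := forall b, b \in l -> inM b.

Lemma allM_cons b l : allM (b :: l) -> inM b /\ allM l.
Proof. by move=> h; split=> [|x xl]; apply: h; rewrite in_cons ?eqxx ?xl ?orbT. Qed.

Lemma prodsubM l x : allM l -> x \in prodsub l -> inM x.
Proof.
elim: l x => [|b l IH] x; first by move=> _; rewrite mem_seq1 => /eqP ->; exact: M1.
move=> /allM_cons [hb hl]; rewrite mem_prodsub => /orP[xl|/mapP[p pl ->]].
  exact: IH hl xl.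
exact: MM hb (IH _ hl pl).
Qed.

Lemma prodsub_gen l b : b \in l -> b \in prodsub l.
Proof.
elim: l => //= a l IH; rewrite in_cons mem_cat => /orP[/eqP->|/IH->] //.
apply/orP; right; apply/mapP; exists (o : Teq T); first exact: prodsub1.
by rewrite mulg1.
Qed.

Lemma prodsub_mul l x y : allM l -> x \in prodsub l -> y \in prodsub l ->
  (x * y : Teq T) \in prodsub l.
Proof.
elim: l x y => [|b l IH] x y.
  by move=> _; rewrite !mem_seq1 => /eqP -> /eqP ->; rewrite mul1g.
move=> hl; have [hb hl'] := allM_cons hl.
rewrite !mem_prodsub => /orP[xl|/mapP[p pl ->]] /orP[yl|/mapP[q ql ->]].
- by rewrite IH.
- apply/orP; right; apply/mapP; exists (x * q : Teq T); first exact: IH.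
  have hx := prodsubM hl' xl; rewrite !mulgA (Mcomm hx hb) //.
- apply/orP; right; apply/mapP; exists (p * y : Teq T); first exact: IH.
  by rewrite mulgA.
- apply/orP; left.
  have hp := prodsubM hl' pl.
  rewrite -mulgA (mulgA L p b q) (Mcomm hp hb) -mulgA mulgA Msq // mul1g.
  exact: IH.
Qed.

Lemma prodsub_cm (S : seq (Teq T)) l i x : allM S -> allM l ->
  (forall b, b \in l -> (cm b (g i) : Teq T) \in prodsub S) ->
  x \in prodsub l -> (cm x (g i) : Teq T) \in prodsub S.
Proof.
move=> hS; elim: l x => [|b l IH] x.
  by move=> _ _; rewrite mem_seq1 => /eqP ->; rewrite cm1g prodsub1.
move=> hl hb; have [hbM hl'] := allM_cons hl.
rewrite mem_prodsub => /orP[xl|/mapP[p pl ->]].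
  by apply: IH => // c cl; apply: hb; rewrite in_cons cl orbT.
rewrite cm_hom //; last exact: prodsubM pl.
apply: prodsub_mul => //; first by apply: hb; rewrite mem_head.
by apply: IH => // c cl; apply: hb; rewrite in_cons cl orbT.
Qed.

Definition mn (A : {set 'I_n}) (j : 'I_n) : 'I_n := [arg min_(i < j in A) (i : nat)].

Lemma mnP (A : {set 'I_n}) (j : 'I_n) : j \in A -> mn A j \in A /\ forall k, k \in A -> (mn A j <= k)%N.
Proof. by move=> jA; rewrite /mn; case: arg_minnP => // m mA H; split. Qed.

Lemma mn_eq (A : {set 'I_n}) (j m : 'I_n) : j \in A -> m \in A -> (forall k, k \in A -> (m <= k)%N) -> mn A j = m.
Proof.
move=> jA mA H; have [h1 h2] := mnP jA; apply: val_inj => /=.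
by apply/eqP; rewrite eqn_leq h2 // H.
Qed.

Definition cc (a b : 'I_n) := cm (g a) (g b).

Definition bel (A : {set 'I_n}) (j : 'I_n) : Teq T :=
  xact (enum (A :\ mn A j :\ j)) (cc (mn A j) j).

Definition Bl : seq (Teq T) :=
  flatten [seq [seq bel A j | j <- enum A & j != mn A j] | A <- enum [set: {set 'I_n}]].

Lemma Bl_mem (A : {set 'I_n}) (j : 'I_n) : j \in A -> j != mn A j -> bel A j \in Bl.
Proof.
move=> jA jm; apply/flattenP; exists [seq bel A j | j <- enum A & j != mn A j].
  by apply/mapP; exists A; rewrite ?mem_enum ?inE.
by apply/mapP; exists j => //; rewrite mem_filter jm mem_enum.
Qed.

Lemma allM_Bl : allM Bl.
Proof.
move=> b /flattenP [s /mapP [A _ ->] /mapP [j _ ->]].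
apply: xact_M; exact: Mcm.
Qed.

Definition Sp (x : T) := (x : Teq T) \in prodsub Bl.

Lemma Sp1 : Sp o. Proof. exact: prodsub1. Qed.
Lemma SpM x y : Sp x -> Sp y -> Sp (x * y).
Proof. exact: prodsub_mul allM_Bl. Qed.
Lemma Sp_M x : Sp x -> inM x.
Proof. exact: prodsubM allM_Bl. Qed.
Lemma SpV x : Sp x -> Sp (x^-1).
Proof. by move=> h; rewrite MinvE //; exact: Sp_M. Qed.
Lemma Sp_sub : subgrp L Sp.
Proof. split; [exact: Sp1|exact: SpM|exact: SpV]. Qed.
Lemma SpB b : b \in Bl -> Sp b.
Proof. exact: prodsub_gen. Qed.

Lemma jacobi' (a b c : 'I_n) : cm (cc a b) (g c) = cm (cc b c) (g a) * cm (cc c a) (g b).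
Proof.
have h := jacobi a b c; rewrite -mulgA in h.
have E := inv_eq h; rewrite MinvE in E; [exact: E|apply: Mcm].
Qed.

Lemma cc_sym (a b : 'I_n) : cc a b = cc b a. Proof. exact: cm_sym. Qed.

Lemma perm_enum_set (s : seq 'I_n) (A : {set 'I_n}) : uniq s -> s =i A ->
  perm_eq s (enum A).
Proof. move=> us h; apply: uniq_perm => // [|k]; [exact: enum_uniq|by rewrite mem_enum h]. Qed.

Lemma bel_cm (A : {set 'I_n}) (j i : 'I_n) : j \in A -> j != mn A j -> Sp (cm (bel A j) (g i)).
Proof.
move=> jA jm; have [aA amin] := mnP jA; set a := mn A j in jm aA amin *.
set Ls := enum (A :\ a :\ j).
have hc : inM (cc a j) by apply: Mcm.
have -> : cm (bel A j) (g i) = xact (i :: Ls) (cc a j) by [].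
have uL : uniq Ls := enum_uniq _.
case iL: (i \in Ls); first by rewrite xact_dup //; exact: Sp1.
case: (eqVneq i a) => [->|ia]; first by rewrite xact_c_l ?mem_head //; exact: Sp1.
case: (eqVneq i j) => [->|ij]; first by rewrite xact_c_r ?mem_head //; exact: Sp1.
have iA : i \notin A by move: iL; rewrite /Ls mem_enum !in_setD1 ij ia /= => ->.
have aj : a != j by rewrite eq_sym.
case: (ltnP a i) => [ai|].
  (* a < i : the element is in B directly *)
  set A' := i |: A.
  have jA' : j \in A' by rewrite in_setU1 jA orbT.
  have mA' : mn A' j = a.
    apply: mn_eq => //; first by rewrite in_setU1 aA orbT.
    move=> k; rewrite in_setU1 => /orP[/eqP->|kA]; [exact: ltnW|exact: amin].
  have -> : xact (i :: Ls) (cc a j) = bel A' j.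
    rewrite /bel mA'; apply: xact_perm; first exact: Mcm.
    apply: perm_enum_set.
      by rewrite /= uL mem_enum !in_setD1 ij ia (negbTE iA).
    move=> k; rewrite in_cons mem_enum !in_setD1 in_setU1.
    case: (eqVneq k i) => [->|ki] /=; first by rewrite ij ia.
    by [].
  apply: SpB; apply: Bl_mem => //; rewrite mA'.
  by rewrite eq_sym.
rewrite leq_eqVlt => /orP[/eqP/val_inj ai|ia']; first by rewrite ai eqxx in ia.
(* i < a : Jacobi *)
set A' := i |: A.
have iA' : i \in A' by rewrite in_setU1 eqxx.
have mA' : forall k, k \in A' -> mn A' k = i.
  move=> k kA'; apply: mn_eq => //.
  move=> k'; rewrite in_setU1 => /orP[/eqP->//|kA].
  by apply: ltnW; apply: (leq_trans ia'); apply: amin.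
rewrite (xact_consE i Ls hc) (jacobi' a j i) xact_hom; try by apply: Mcm.
rewrite -(xact_consE a Ls (Mcm (g j) (g i))) -(xact_consE j Ls (Mcm (g i) (g a))).
apply: SpM; apply: SpB.
- have jA' : j \in A' by rewrite in_setU1 jA orbT.
  have -> : xact (a :: Ls) (cc j i) = bel A' j.
    rewrite /bel (mA' _ jA') cc_sym; apply: xact_perm; first exact: Mcm.
    apply: perm_enum_set.
      by rewrite /= uL mem_enum !in_setD1 eqxx andbF.
    move=> k; rewrite in_cons mem_enum !in_setD1 in_setU1.
    case: (eqVneq k a) => [->|ka] /=; first by rewrite aA (negbTE aj) eq_sym (negbTE ia).
    case: (eqVneq k i) => [->|ki] /=; first by rewrite (negbTE iA) andbF.
    by [].
  apply: Bl_mem => //; rewrite (mA' _ jA').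
  by rewrite eq_sym.
- have aA' : a \in A' by rewrite in_setU1 aA orbT.
  have -> : xact (j :: Ls) (cc i a) = bel A' a.
    rewrite /bel (mA' _ aA'); apply: xact_perm; first exact: Mcm.
    apply: perm_enum_set.
      by rewrite /= uL mem_enum !in_setD1 eqxx.
    move=> k; rewrite in_cons mem_enum !in_setD1 in_setU1.
    case: (eqVneq k j) => [->|kj] /=; first by rewrite jA jm eq_sym (negbTE ij).
    case: (eqVneq k i) => [->|ki] /=; first by rewrite (negbTE iA) andbF.
    by [].
  apply: Bl_mem => //; rewrite (mA' _ aA').
  by rewrite eq_sym.
Qed.

Lemma Sp_cm x (i : 'I_n) : Sp x -> Sp (cm x (g i)).
Proof.
apply: prodsub_cm; [exact: allM_Bl|exact: allM_Bl|].
by move=> b /flattenP [s /mapP [A _ ->] /mapP [j]]; rewrite mem_filter mem_enum => /andP[jm jA] ->; apply: bel_cm.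
Qed.

Lemma Sp_cc (a b : 'I_n) : Sp (cc a b).
Proof.
wlog ab : a b / (a <= b)%N.
  move=> H; case: (leqP a b) => [/H//|/ltnW/H]; by rewrite cc_sym.
case: (eqVneq a b) => [->|ne]; first by rewrite /cc cm_gg; exact: Sp1.
set A := [set a; b].
have bA : b \in A by rewrite !inE eqxx orbT.
have mA : mn A b = a.
  apply: mn_eq => //; first by rewrite !inE eqxx.
  by move=> k; rewrite !inE => /orP[/eqP->|/eqP->].
have -> : cc a b = bel A b.
  rewrite /bel mA.
  have -> : A :\ a :\ b = set0.
    apply/setP => k; rewrite !inE; case: (eqVneq k b) => //= _.
    by case: (eqVneq k a).
  by rewrite enum_set0.
by apply: SpB; apply: Bl_mem => //; rewrite mA eq_sym.
Qed.

Lemma Sp_conj x (i : 'I_n) : Sp x -> Sp (conj x (g i)).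
Proof. by move=> h; rewrite conjE'; [apply: SpM => //; apply: Sp_cm|exact: Sp_M]. Qed.

Lemma Sp_conjw x l : Sp x -> Sp (conj x (hword l)).
Proof.
elim: l x => [|i l IH] x h /=; first by rewrite conj1.
by rewrite conjMh; apply: IH; apply: Sp_conj.
Qed.

Lemma Sp_gcomm i l2 : Sp (cm (g i) (hword l2)).
Proof.
elim: l2 => [|j l2 IH2] /=; first by rewrite cmg1; exact: Sp1.
rewrite cmM2; apply: SpM => //; apply: Sp_conjw; exact: Sp_cc.
Qed.

Lemma Sp_hcomm l1 l2 : Sp (cm (hword l1) (hword l2)).
Proof.
elim: l1 => [|i l1 IH] /=; first by rewrite cm1g; exact: Sp1.
rewrite cmM1; apply: SpM => //; apply: Sp_conjw; exact: Sp_gcomm.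
Qed.

Lemma phi_hword l : phi (hword l) = (\sum_(i <- l) basis_e i)%R.
Proof. by elim: l => [|i l IH] /=; rewrite ?big_nil ?phi1 // big_cons Hphi Hg IH. Qed.

Definition vl (v : Vn n) := [seq i <- enum 'I_n | v ord0 i != 0%R].

Lemma F2_nz (x : 'F_2) : x != 0%R -> x = 1%R.
Proof. by case: x => [[|[|m]] //= Hm] _; apply/eqP. Qed.

Lemma sum_vl v : (\sum_(i <- vl v) basis_e i)%R = v.
Proof.
apply/rowP => k; rewrite summxE big_filter.
rewrite (eq_bigr (fun i => (i == k)%:R)%R); last first.
  by move=> i _; rewrite /basis_e mxE eqxx /= eq_sym.
rewrite big_mkcond (bigD1_seq k) ?mem_enum ?enum_uniq //= eqxx.
rewrite big1 ?addr0; last by move=> i ik; rewrite (negbTE ik); case: ifP.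
by case: (eqVneq (v ord0 k) 0%R) => [->|/F2_nz ->].
Qed.

Lemma phi_hword_vl x : phi (hword (vl (phi x))) = phi x.
Proof. by rewrite phi_hword sum_vl. Qed.

Lemma decomp x : exists l m, inM m /\ x = hword l * m.
Proof.
exists (vl (phi x)), ((hword (vl (phi x)))^-1 * x); split; last by rewrite mulKVg.
by rewrite /inM Hphi phiV phi_hword_vl addNr.
Qed.

Definition Ik k := generated L (fun y => exists l z, inM z /\ (k <= size l)%N /\ y = xact l z).

Lemma Ik_sub k : subgrp L (Ik k). Proof. exact: gen_subgrp. Qed.
Lemma Ik_M k x : Ik k x -> inM x.
Proof. apply: gen_sub; first exact: Msub. by move=> y [l [z [hz [_ ->]]]]; apply: xact_M. Qed.
Lemma Ik_mono k k' x : (k' <= k)%N -> Ik k x -> Ik k' x.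
Proof.
move=> le; apply: gen_mono => y [l [z [hz [hk ->]]]]; exists l, z; split => //; split => //.
exact: leq_trans hk.
Qed.
Lemma Ik0 z : inM z -> Ik 0 z.
Proof. by move=> hz; apply: gen_in; exists [::], z. Qed.

Lemma Ik_cmg k z i : Ik k z -> Ik k.+1 (cm z (g i)).
Proof.
move=> h; suff : inM z /\ Ik k.+1 (cm z (g i)) by case.
move: z h; apply: gen_sub.
  split.
  - by split; [exact: M1|rewrite cm1g; exact: gen_one].
  - move=> x y [hx ix] [hy iy]; split; first exact: MM.
    by rewrite cm_hom //; apply: gen_mul.
  - by move=> x [hx ix]; rewrite MinvE.
move=> y [l [z [hz [hk ->]]]]; split; first exact: xact_M.
by apply: gen_in; exists (i :: l), z.
Qed.

Lemma Ik_xact k z l : Ik k z -> Ik (k + size l) (xact l z).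
Proof.
elim: l => [|i l IH] h /=; first by rewrite addn0.
by rewrite addnS; apply: Ik_cmg; apply: IH.
Qed.

Lemma Ik_cmw l k z : Ik k z -> Ik k.+1 (cm z (hword l)).
Proof.
elim: l k z => [|i l IH] k z h /=; first by rewrite cmg1; exact: gen_one.
have hz := Ik_M h.
rewrite cmM2; apply: gen_mul; first exact: IH.
have hu := Ik_cmg i h.
rewrite conjE'; last exact: Ik_M hu.
apply: gen_mul => //; apply: (@Ik_mono k.+2) => //; exact: IH.
Qed.

Lemma Ik_cm k z y : Ik k z -> Ik k.+1 (cm z y).
Proof.
move=> h; have [l [m [hm ->]]] := decomp y.
have hz := Ik_M h.
rewrite cmM2 cm_triv // conj_triv ?mul1g; [exact: Ik_cmw|exact: Mcm|by []].
Qed.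

Lemma Ik_top z : Ik n.+1 z -> z = o.
Proof.
move: z; apply: (@gen_sub _ L _ (fun x => x = o)).
  split => //; first by move=> x y -> ->; rewrite mul1g.
  by move=> x ->; rewrite invg1.
move=> y [l [z' [hz [hk ->]]]]; apply: xact_nuniq => //.
apply/negP => ul.
have := uniq_leq_size ul (fun i _ => mem_enum 'I_n i).
by rewrite size_enum_ord => /(leq_trans hk); rewrite ltnn.
Qed.

Definition SI k x := exists s w, Sp s /\ Ik k w /\ x = s * w.

Lemma SI_M k x : SI k x -> inM x.
Proof. by move=> [s [w [hs [hw ->]]]]; apply: MM; [exact: Sp_M|exact: Ik_M hw]. Qed.

Lemma SI_sub k : subgrp L (SI k).
Proof.
split.
- by exists o, o; split; [exact: Sp1|split; [exact: gen_one|rewrite mul1g]].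
- move=> x y [s [w [hs [hw ->]]]] [s' [w' [hs' [hw' ->]]]].
  exists (s * s'), (w * w'); split; first exact: SpM.
  split; first exact: gen_mul.
  rewrite !mulgA; congr (_ * _); rewrite -!mulgA; congr (_ * _).
  apply: Mcomm; [exact: Ik_M hw|exact: Sp_M].
- by move=> x hx; rewrite MinvE //; exact: SI_M hx.
Qed.

Lemma Sp_xact l x : Sp x -> Sp (xact l x).
Proof. by elim: l => //= i l IH h; apply: Sp_cm; apply: IH. Qed.

Lemma gcomm_decomp x y : exists h h' a b, inM a /\ inM b /\
  cm x y = cm b (hword h) * cm (hword h) (hword h') * cm a (hword h').
Proof.
have [h [a [ha ->]]] := decomp x; have [h' [b [hb ->]]] := decomp y.
exists h, h', a, b; split => //; split => //.
rewrite cmM1 (conj_triv (Mcm _ _) ha) (cmM2 L (hword h)) (cmM2 L a).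
rewrite (conj_triv (Mcm _ _) hb) (conj_triv (Mcm _ _) hb) (cm_triv ha hb) mul1g.
by rewrite -(cm_inv L b) MinvE //; exact: Mcm.
Qed.

Lemma SI_step k w : Ik k w -> SI k.+1 w.
Proof.
apply: gen_sub; first exact: SI_sub.
move=> y [l [z [hz [hk ->]]]].
suff : inM z /\ SI k.+1 (xact l z) by case.
move: z {hz} ((Hc z).2 hz); apply: gen_sub.
  split.
  - split; first exact: M1.
    by rewrite xact_1; case: (SI_sub k.+1).
  - move=> x1 x2 [h1 s1] [h2 s2]; split; first exact: MM.
    by rewrite xact_hom //; case: (SI_sub k.+1) => _ hM _; apply: hM.
  - by move=> x1 [h1 s1]; rewrite MinvE.
move=> z0 [x0 [y0 [_ [_ ->]]]]; split; first exact: Mcm.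
have [h [h' [a [b [ha [hb ->]]]]]] := gcomm_decomp x0 y0.
have hX : Ik 1 (cm b (hword h)) by apply: Ik_cm; apply: Ik0.
have hZ : Ik 1 (cm a (hword h')) by apply: Ik_cm; apply: Ik0.
have hY : Sp (cm (hword h) (hword h')) by apply: Sp_hcomm.
have mX := Ik_M hX; have mZ := Ik_M hZ; have mY := Sp_M hY.
rewrite (xact_hom l (MM mX mY) mZ) (xact_hom l mX mY).
have iX := Ik_xact l hX; have iZ := Ik_xact l hZ.
have sY := Sp_xact l hY.
exists (xact l (cm (hword h) (hword h'))), (xact l (cm b (hword h)) * xact l (cm a (hword h'))).
split => //; split.
  apply: gen_mul; apply: (@Ik_mono (1 + size l)) => //; rewrite add1n ltnS //.
rewrite (Mcomm (xact_M _ mX) (xact_M _ mY)) -mulgA //.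
Qed.

Lemma SI_all k x : inM x -> SI k x.
Proof.
move=> hx; elim: k => [|k [s [w [hs [hw ->]]]]].
  by exists o, x; split; [exact: Sp1|split; [exact: Ik0|rewrite mul1g]].
have [s' [w' [hs' [hw' ->]]]] := SI_step hw.
by exists (s * s'), w'; split; [exact: SpM|split => //; rewrite mulgA].
Qed.

Lemma M_Sp x : inM x -> Sp x.
Proof.
move=> hx; have [s [w [hs [hw ->]]]] := SI_all n.+1 hx.
by rewrite (Ik_top hw) mulg1.
Qed.

Lemma lcs_Ik k x : lcs L k.+2 x -> Ik k x.
Proof.
elim: k x => [|k IH] x.
  by move=> h; apply: Ik0; apply/Hc.
move=> /= h; move: x h; apply: gen_sub; first exact: Ik_sub.
move=> z [x0 [y0 [_ [hy ->]]]].
rewrite -cm_inv; case: (Ik_sub k.+1) => _ _ hV; apply: hV.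
by apply: Ik_cm; apply: IH.
Qed.

Lemma lcs_top x : lcs L n.+3 x -> x = o.
Proof. by move=> h; apply: Ik_top; apply: lcs_Ik. Qed.

Lemma lcs_sub m : subgrp L (lcs L m).
Proof.
case: m => [|[|m]]; try by split.
exact: gen_subgrp.
Qed.

Lemma lcs_dec m x : lcs L m.+1 x -> lcs L m x.
Proof.
elim: m x => [|m IH] x //.
case: m IH => [|m] IH //.
move=> /= h; apply: gen_mono h => z [x0 [y0 [t [hy ->]]]].
by exists x0, y0; split => //; split => //; apply: IH.
Qed.

Definition Gg := generated L (fun y => exists i, y = g i).

Lemma Gg_cm x y : Gg x -> Gg y -> Gg (cm x y).
Proof. by move=> hx hy; rewrite /gcomm; repeat apply: gen_mul; try apply: gen_inv. Qed.

Lemma Gg_hword l : Gg (hword l).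
Proof. elim: l => [|i l IH] /=; [exact: gen_one|apply: gen_mul => //; apply: gen_in; by exists i]. Qed.

Lemma Gg_xact l z : Gg z -> Gg (xact l z).
Proof. elim: l => //= i l IH hz; apply: Gg_cm; [exact: IH|apply: gen_in; by exists i]. Qed.

Lemma Gg_prodsub (l : seq (Teq T)) x : (forall b, b \in l -> Gg b) -> x \in prodsub l -> Gg x.
Proof.
elim: l x => [|b l IH] x hl; first by rewrite mem_seq1 => /eqP ->; exact: gen_one.
rewrite mem_prodsub => /orP[xl|/mapP[p pl ->]].
  by apply: IH => // c cl; apply: hl; rewrite in_cons cl orbT.
apply: gen_mul; first by apply: hl; rewrite mem_head.
by apply: IH => // c cl; apply: hl; rewrite in_cons cl orbT.
Qed.

Lemma Gg_all x : Gg x.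
Proof.
have [l [m [hm ->]]] := decomp x.
apply: gen_mul; first exact: Gg_hword.
apply: Gg_prodsub (M_Sp hm).
move=> b /flattenP [s /mapP [A _ ->] /mapP [j _ ->]].
apply: Gg_xact; apply: Gg_cm; apply: gen_in; by eexists.
Qed.

Definition Alist : seq (Teq T) :=
  [seq (hword (vl v) * p : Teq T) | v : Vn n <- enum [set: Vn n], p : Teq T <- prodsub Bl].

Lemma Alist_all x : (x : Teq T) \in Alist.
Proof.
have e : x = hword (vl (phi x)) * ((hword (vl (phi x)))^-1 * x) by rewrite mulKVg.
have hm : inM ((hword (vl (phi x)))^-1 * x).
  by rewrite /inM Hphi phiV phi_hword_vl addNr.
rewrite {1}e; apply: (@allpairs_f _ _ _ (fun (v : Vn n) (p : Teq T) => (hword (vl v) * p : Teq T))).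
  by rewrite mem_enum inE.
exact: M_Sp hm.
Qed.

Lemma size_Alist : size Alist = (2 ^ n * 2 ^ size Bl)%N.
Proof.
rewrite size_allpairs size_prodsub -cardE cardsT /Vn card_mx card_Fp //.
by rewrite mul1n.
Qed.

Lemma count_mn (A : {set 'I_n}) : count (fun j => j != mn A j) (enum A) = (#|A|).-1.
Proof.
case: (eqVneq A set0) => [->|/set0Pn [j0 j0A]]; first by rewrite enum_set0 cards0.
have [m0A m0min] := mnP j0A.
rewrite (@eq_in_count _ _ (predC1 (mn A j0))); last first.
  move=> j; rewrite mem_enum => jA /=; congr negb; congr eq_op.
  by apply: mn_eq.
have := count_predC (pred1 (mn A j0)) (enum A).
rewrite count_uniq_mem ?enum_uniq // mem_enum m0A -cardE add1n => <- /=.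
by apply: eq_count => j.
Qed.

Lemma size_Bl : (size Bl + 2 ^ n = n * 2 ^ n.-1 + 1)%N.
Proof.
rewrite -comb; congr addn.
rewrite /Bl size_flatten /shape -map_comp sumnE big_map big_enum /=.
rewrite (eq_bigl xpredT); last by move=> A; rewrite inE.
apply: eq_bigr => A _ /=; rewrite size_map size_filter; exact: count_mn.
Qed.

Lemma final_main : exists N : nat, [/\ card_group T N, card_Lbullet L N,
    (N <= 2 ^ ((n * 2 ^ n.-1 + n + 1) - 2 ^ n))%N &
    forall x : T, generated L (fun y => exists i, y = g i) x].
Proof.
have [N [h1 h2 h3]] := @chain_count _ L (fun m => lcs L m.+1) (fun m => lcs_sub m.+1)
  (fun m x => @lcs_dec m.+1 x) Alist Alist_all n.+2 (fun _ => I) lcs_top.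
exists N; split => //; last exact: Gg_all.
apply: (leq_trans h3); rewrite size_Alist -expnD.
have -> : ((n * 2 ^ n.-1 + n + 1) - 2 ^ n = n + size Bl)%N.
  by rewrite -addnA (addnC n 1) addnA -size_Bl addnAC addnK addnC.
by [].
Qed.

End Exp.

Theorem proposition3p9 (n : nat) (T : Type) (L : group_law T)
    (phi : T -> Vn n) (g : 'I_n -> T) :
  expansion_group L phi g ->
  exists N : nat,
    [/\ card_group T N, card_Lbullet L N,
        N <= 2 ^ ((n * 2 ^ n.-1 + n + 1) - 2 ^ n) &
        forall x : T, generated L (fun y => exists i, y = g i) x].
Proof.
case=> Hphi Hg Hgg HM Hc.
exact: (final_main Hphi Hg Hgg HM Hc).
Qed.
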